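(* Let $m\ge 1$, $n\ge 1$ be integers, let $K\in\{\mathbb{R},\mathbb{C}\}$, and let $\mathcal{Z}$ be either $\mathbb{Z}^m$ or $\{t\in\mathbb{Z}^m \mid t\ge t_1\}$ for some $t_1\in\mathbb{Z}^m$. Let $A_\alpha\colon\mathcal{Z}\to\mathcal{M}_n(K)$, $\alpha\in\{1,\dots,m\}$, be matrix functions satisfying the compatibility relations $$A_\alpha(t+1_\beta)A_\beta(t)=A_\beta(t+1_\alpha)A_\alpha(t),\quad \forall t\in\mathcal{Z},\ \forall \alpha,\beta\in\{1,\dots,m\}.$$ Let $T=(T_1,\dots,T_m)\in\mathbb{N}^m$, $T\neq 0$, and suppose that $A_\alpha(t+T_\beta\cdot 1_\beta)=A_\alpha(t)$ for all $\alpha,\beta\in\{1,\dots,m\}$ and all $t\in\mathcal{Z}$. Then: (a) $C_{\alpha,k}(t+T_\beta\cdot 1_\beta)=C_{\alpha,k}(t)$ for all $\alpha,\beta\in\{1,\dots,m\}$, all $k\in\mathbb{N}$ and all $t\in\mathcal{Z}$; (b) $C_{\alpha,T_\alpha}(t)\,C_{\beta,T_\beta}(t)=C_{\beta,T_\beta}(t)\,C_{\alpha,T_\alpha}(t)$ for all $\alpha,\beta\in\{1,\dots,m\}$ and all $t\in\mathcal{Z}$; (c) $\chi(t+T_\alpha\cdot 1_\alpha,s)=\chi(t,s)\,C_{\alpha,T_\alpha}(s)$ for all $\alpha\in\{1,\dots,m\}$ and all $t,s\in\mathcal{Z}$ with $t\ge s$.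
   Context: $\mathbb{N}=\{0,1,2,\dots\}$. For $\alpha\in\{1,\dots,m\}$, $1_\alpha\in\mathbb{Z}^m$ is the vector with $1$ in position $\alpha$ and $0$ elsewhere. On $\mathbb{Z}^m$, $s\le t$ means $s^\alpha\le t^\alpha$ for all $\alpha$. For $\alpha\in\{1,\dots,m\}$, $k\in\mathbb{N}$, $t\in\mathcal{Z}$, define $C_{\alpha,0}(t)=I_n$ and, for $k\ge1$, $C_{\alpha,k}(t)=\prod_{j=1}^{k}A_\alpha(t+(k-j)\cdot 1_\alpha)=A_\alpha(t+(k-1)1_\alpha)\cdots A_\alpha(t+1_\alpha)A_\alpha(t)$. Under the compatibility relations, for each $s\in\mathcal{Z}$ there is a unique function $\chi(\cdot,s)\colon\{t\in\mathcal{Z}\mid t\ge s\}\to\mathcal{M}_n(K)$ with $\chi(s,s)=I_n$ and $\chi(t+1_\alpha,s)=A_\alpha(t)\chi(t,s)$ for all $t\ge s$ and all $\alpha$; $\chi$ is called the transition (fundamental) matrix. *)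

(* Defs.v *)
From HB Require Import structures.
From mathcomp Require Import all_boot all_order all_algebra.
From mathcomp Require Import reals.
From mathcomp Require Import complex.
Set Implicit Arguments. Unset Strict Implicit. Unset Printing Implicit Defensive.
Import Order.TTheory GRing.Theory Num.Theory.
Local Open Scope ring_scope.

Definition shift (m : nat) (t : 'I_m -> int) (a : 'I_m) (k : nat) : 'I_m -> int :=
  fun i => t i + (if i == a then k%:Z else 0).

Definition zle (m : nat) (s t : 'I_m -> int) : Prop := forall i, s i <= t i.

(* The domain calZ: None means Z^m, Some t1 means {t | t >= t1}. *)
Definition inDom (m : nat) (dom : option ('I_m -> int)) (t : 'I_m -> int) : Prop :=
  match dom with None => True | Some t1 => zle t1 t end.

(* C_{a,k}(t) = A_a(t+(k-1)1_a) ... A_a(t+1_a) A_a(t), C_{a,0}(t) = I_n *)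
Fixpoint Cmat (K : comNzRingType) (m n : nat) (A : 'I_m -> ('I_m -> int) -> 'M[K]_n)
  (a : 'I_m) (k : nat) (t : 'I_m -> int) : 'M[K]_n :=
  match k with
  | 0 => 1%:M
  | k'.+1 => A a (shift t a k') *m Cmat A a k' t
  end.

(* The full statement of Proposition 2.7 for a given scalar ring K. The
   transition matrix chi is quantified as any function satisfying its
   (uniquely) characterizing properties. *)
Definition prop2p7_stmt (K : comNzRingType) : Prop :=
  forall (m n : nat) (dom : option ('I_m -> int))
    (A : 'I_m -> ('I_m -> int) -> 'M[K]_n)
    (T : 'I_m -> nat)
    (chi : ('I_m -> int) -> ('I_m -> int) -> 'M[K]_n),
  (0 < m)%N -> (0 < n)%N ->
  (forall t, inDom dom t -> forall a b : 'I_m,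
      A a (shift t b 1) *m A b t = A b (shift t a 1) *m A a t) ->
  (exists i, T i != 0%N) ->
  (forall a b : 'I_m, forall t, inDom dom t -> A a (shift t b (T b)) = A a t) ->
  (forall s, inDom dom s -> chi s s = 1%:M) ->
  (forall s t, inDom dom s -> inDom dom t -> zle s t ->
      forall a : 'I_m, chi (shift t a 1) s = A a t *m chi t s) ->
  (forall (a b : 'I_m) (k : nat) t, inDom dom t ->
      Cmat A a k (shift t b (T b)) = Cmat A a k t)
  /\ (forall (a b : 'I_m) t, inDom dom t ->
      Cmat A a (T a) t *m Cmat A b (T b) t = Cmat A b (T b) t *m Cmat A a (T a) t)
  /\ (forall (a : 'I_m) s t, inDom dom s -> inDom dom t -> zle s t ->
      chi (shift t a (T a)) s = chi t s *m Cmat A a (T a) s).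

(* Main.v *)
Require Import Defs.
From HB Require Import structures.
From mathcomp Require Import all_boot all_order all_algebra.
From mathcomp Require Import reals.
From mathcomp Require Import complex.
From mathcomp Require Import zify.
From Stdlib Require Import FunctionalExtensionality.
Set Implicit Arguments. Unset Strict Implicit. Unset Printing Implicit Defensive.
Import Order.TTheory GRing.Theory Num.Theory.
Local Open Scope ring_scope.

Lemma shiftC m (t : 'I_m -> int) a b x y :
  shift (shift t a x) b y = shift (shift t b y) a x.
Proof. apply: functional_extensionality => i; by rewrite /shift addrAC. Qed.

Lemma shiftD m (t : 'I_m -> int) a x y :
  shift (shift t a x) a y = shift t a (x + y).
Proof.
apply: functional_extensionality => i; rewrite /shift.
by case: (i == a); rewrite ?addr0 // -addrA -PoszD.
Qed.

Lemma shift0 m (t : 'I_m -> int) a : shift t a 0 = t.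
Proof. apply: functional_extensionality => i; rewrite /shift; by case: (i == a); rewrite addr0. Qed.

Lemma zle_shift m (t : 'I_m -> int) a k : zle t (shift t a k).
Proof. move=> i; rewrite /shift; case: (i == a); rewrite ?addr0 //; lia. Qed.

Lemma zle_trans m (r s t : 'I_m -> int) : zle r s -> zle s t -> zle r t.
Proof. move=> h1 h2 i; exact: le_trans (h1 i) (h2 i). Qed.

Lemma inDom_le m dom (s t : 'I_m -> int) : inDom dom s -> zle s t -> inDom dom t.
Proof. case: dom => //= t1 h1 h2; exact: zle_trans h1 h2. Qed.

Lemma inDom_shift m dom (t : 'I_m -> int) a k : inDom dom t -> inDom dom (shift t a k).
Proof. move=> h; apply: inDom_le h _; exact: zle_shift. Qed.

Lemma ind_le m (s : 'I_m -> int) (P : ('I_m -> int) -> Prop) :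
  P s -> (forall t b, zle s t -> P t -> P (shift t b 1)) -> forall t, zle s t -> P t.
Proof.
move=> Ps Pst.
suff H : forall N t, zle s t -> (\sum_(i < m) absz (t i - s i) <= N)%N -> P t.
  by move=> t h; apply: (H _ t h).
elim=> [|N IH] t hst hN.
all: case: (boolP [exists i, s i < t i]) => [/existsP [i hi] | /existsPn hn].
2,4: have -> : t = s by apply: functional_extensionality => j;
       apply/eqP; rewrite eq_le hst andbT; move: (hn j); rewrite -leNgt.
2,3: exact: Ps.
all: set t' := fun j => if j == i then t j - 1 else t j.
all: have ht : shift t' i 1 = t by apply: functional_extensionality => j;
       rewrite /shift /t'; case: (j == i) => //; rewrite ?addr0 // subrK.
all: have hst' : zle s t' by move=> j; rewrite /t'; case: ifP => [/eqP ->|_]; [move: hi; lia | exact: hst].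
all: have hsum : (\sum_(j < m) absz (t j - s j) = (\sum_(j < m) absz (t' j - s j)).+1)%N.
1,3: rewrite (bigD1 i) //= [in RHS](bigD1 i) //= /t' eqxx.
1,2: rewrite [in RHS](eq_bigr (fun j => absz (t j - s j))); last by move=> j /negbTE ->.
1,2: lia.
  by rewrite hsum in hN.
rewrite -ht; apply: Pst => //; apply: IH => //; rewrite hsum in hN; lia.
Qed.

Lemma main (K : comNzRingType) : prop2p7_stmt K.
Proof.
move=> m n dom A T chi _ _ Hc _ HP Hchi1 Hchi.
have Cs1 : forall a b k t, inDom dom t ->
    Cmat A a k (shift t b 1) *m A b t = A b (shift t a k) *m Cmat A a k t.
  move=> a b; elim=> [|k IH] t ht /=.
    by rewrite mul1mx mulmx1 shift0.
  rewrite -mulmxA IH // mulmxA (shiftC t b a 1 k) Hc; last exact: inDom_shift.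
  by rewrite shiftD addn1 mulmxA.
have Cg : forall a b l k t, inDom dom t ->
    Cmat A a k (shift t b l) *m Cmat A b l t = Cmat A b l (shift t a k) *m Cmat A a k t.
  move=> a b; elim=> [|l IH] k t ht /=.
    by rewrite mul1mx mulmx1 shift0.
  rewrite -addn1 -shiftD mulmxA Cs1; last exact: inDom_shift.
  by rewrite -mulmxA IH // !mulmxA (shiftC t b a l k).
have Cp : forall a b k t, inDom dom t ->
    Cmat A a k (shift t b (T b)) = Cmat A a k t.
  move=> a b; elim=> [|k IH] t ht //=.
  by rewrite IH // shiftC HP //; apply: inDom_shift.
split; first exact: Cp.
split.
  move=> a b t ht.
  have := Cg a b (T b) (T a) t ht.
  by rewrite !Cp.
move=> a s t hs ht hst.
have chiC : forall k t, zle s t -> chi (shift t a k) s = Cmat A a k t *m chi t s.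
  elim=> [|k IH] u hu /=; first by rewrite shift0 mul1mx.
  rewrite -addn1 -shiftD Hchi //; last exact: zle_trans hu (zle_shift _ _ _).
  - by rewrite IH // mulmxA.
  - exact: inDom_shift (inDom_le hs hu).
rewrite chiC //.
move: t ht hst; suff: forall t, zle s t ->
   Cmat A a (T a) t *m chi t s = chi t s *m Cmat A a (T a) s by move=> H t _; apply: H.
apply: ind_le; first by rewrite Hchi1 // mul1mx mulmx1.
move=> u b hu IH.
have hdu : inDom dom u by apply: inDom_le hs hu.
by rewrite Hchi // mulmxA Cs1 // HP // -!mulmxA IH.
Qed.

Theorem proposition2p7 (R : realType) :
  prop2p7_stmt R /\ prop2p7_stmt (complex R).
Proof. split; exact: main. Qed.
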